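(* Let $G=\langle A\cup B\rangle$ be a CS group with periodic rooted group $A$, and assume that either (i) $A$ has finite exponent, or (ii) the directed group $B$ has finite support. Let $T\subseteq G$ be a set of elements of finite order. Suppose that for every $g\in G\setminus A$ there is some $m\in\mathbb N$ such that for all $v\in X^m$ (for which $\ell_g(v)$ is then finite) we have $\mathrm{syl}(g\|_v)<\mathrm{syl}(g)$ or $g\|_v\in T$. Then $G$ is periodic.
   Context: Let $X$ be a nonempty set (possibly infinite) with a distinguished letter $0\in X$, and $\dot X=X\setminus\{0\}$. $X^*$ is the free monoid on $X$ (concatenation $u\star v$), viewed as a regular rooted tree with layers $X^n$. $\mathrm{Aut}(X^* )$ is the group of root-fixing tree automorphisms, acting on the right ($gh$ = first $g$ then $h$); ${}^hg=hgh^{-1}$. The section $g|_u$ is defined by $(u\star v).g=u.g\star v.(g|_u)$; elements of $\mathrm{Sym}(X)$ are identified with rooted automorphisms $(x\star v).\rho=x.\rho\star v$; $\mathrm{St}(1)$ is the stabiliser of all vertices of $X^1$. For a vertex $v$, $\ell_g(v)$ is the length of its $\langle g\rangle$-orbit; if finite, $g\|_v:=g^{\ell_g(v)}|_v$. A constant spinal (CS) group is $G=\langle A\cup B\rangle$ with $A\le\mathrm{Sym}(X)$ transitive (rooted group) and $B\le\mathrm{St}(1)$ (directed group) such that $b|_0=b$ for all $b\in B$ and the elements $b|_x$ ($b\in B$, $x\in\dot X$) lie in $A$ and generate $A$. $B$ has finite support if each $b\in B$ has $b|_x=\mathrm{id}$ for all but finitely many $x$. Every $g\in G$ is a product $({}^{a_0}b_0)\cdots({}^{a_{n-1}}b_{n-1})a_n$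 ($a_i\in A$, $b_i\in B$); $\mathrm{syl}(g)$ is the least such $n$. A group is periodic if every element has finite order. *)

(* Defs.v *)
From Stdlib Require List.
From mathcomp Require Import all_boot.
Set Implicit Arguments. Unset Strict Implicit. Unset Printing Implicit Defensive.

Section Tree.
Variable X : Type.

Definition word := seq X.
Definition tmap := word -> word.

(* Right action convention: [comp f g] = "first f, then g" (i.e. fg). *)
Definition comp {T : Type} (f g : T -> T) : T -> T := fun x => g (f x).

Fixpoint gpow {T : Type} (f : T -> T) (n : nat) : T -> T :=
  match n with 0 => id | n'.+1 => comp (gpow f n') f end.

(* root-fixing tree automorphism of X^* : a bijection preserving lengths
   and the prefix order *)
Definition isAut (f : tmap) : Prop :=
  bijective f /\ (forall u, size (f u) = size u) /\
  (forall u v, take (size u) (f (u ++ v)) = f u).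

(* the section g|_u, defined by (u * v).g = u.g * v.(g|_u) *)
Definition section (g : tmap) (u : word) : tmap :=
  fun v => drop (size u) (g (u ++ v)).

Definition rooted (rho : X -> X) : tmap :=
  fun w => match w with [::] => [::] | x :: v => rho x :: v end.

Inductive gen {T : Type} (S : (T -> T) -> Prop) : (T -> T) -> Prop :=
| gen_S f : S f -> gen S f
| gen_id : gen S id
| gen_comp f g : gen S f -> gen S g -> gen S (comp f g)
| gen_inv f h : gen S f -> cancel f h -> cancel h f -> gen S h.

Definition is_subgroup {T : Type} (S : (T -> T) -> Prop) : Prop :=
  (forall f, S f -> bijective f) /\ S id /\
  (forall f g, S f -> S g -> S (comp f g)) /\
  (forall f, S f -> exists h, S h /\ cancel f h /\ cancel h f).

Definition isCS (x0 : X) (A : (X -> X) -> Prop) (B : tmap -> Prop) : Prop :=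
  is_subgroup A /\
  (forall x y, exists rho, A rho /\ rho x = y) /\
  is_subgroup B /\
  (forall b, B b -> isAut b /\ forall x, b [:: x] = [:: x]) /\
  (forall b, B b -> section b [:: x0] = b) /\
  (forall b x, B b -> x <> x0 -> exists rho, A rho /\ section b [:: x] = rooted rho) /\
  (forall rho, A rho <->
     gen (fun r => exists b x, B b /\ x <> x0 /\ section b [:: x] = rooted r) rho).

Definition CSgroup (A : (X -> X) -> Prop) (B : tmap -> Prop) : tmap -> Prop :=
  gen (fun g => (exists rho, A rho /\ g = rooted rho) \/ B g).

Definition inA (A : (X -> X) -> Prop) (g : tmap) : Prop :=
  exists rho, A rho /\ g = rooted rho.

(* g = (^{a_0}b_0) ... (^{a_{n-1}}b_{n-1}) a_n, with ^h g = h g h^{-1} *)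
Fixpoint syl_prod (l : seq ((X -> X) * (X -> X) * tmap)) (an : X -> X) : tmap :=
  match l with
  | [::] => rooted an
  | (a, a', b) :: l' =>
      comp (comp (comp (rooted a) b) (rooted a')) (syl_prod l' an)
  end.

Definition has_syl_decomp (A : (X -> X) -> Prop) (B : tmap -> Prop)
    (g : tmap) (n : nat) : Prop :=
  exists (l : seq ((X -> X) * (X -> X) * tmap)) (an : X -> X),
    size l = n /\ A an /\
    (forall a a' b, List.In (a, a', b) l ->
       A a /\ A a' /\ cancel a a' /\ cancel a' a /\ B b) /\
    g = syl_prod l an.

Definition is_syl (A : (X -> X) -> Prop) (B : tmap -> Prop) (g : tmap) (n : nat) : Prop :=
  has_syl_decomp A B g n /\ (forall k, has_syl_decomp A B g k -> n <= k).

Definition finite_order {T : Type} (f : T -> T) : Prop :=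
  exists n, 0 < n /\ gpow f n = id.

Definition orbit_len (g : tmap) (v : word) (l : nat) : Prop :=
  0 < l /\ gpow g l v = v /\ (forall k, 0 < k < l -> gpow g k v <> v).

Definition orbit_section (g : tmap) (v : word) (l : nat) : tmap :=
  section (gpow g l) v.

Definition periodic {T : Type} (S : (T -> T) -> Prop) : Prop :=
  forall f, S f -> finite_order f.

Definition finite_exponent {T : Type} (S : (T -> T) -> Prop) : Prop :=
  exists n, 0 < n /\ forall f, S f -> gpow f n = id.

Definition finite_support (B : tmap -> Prop) : Prop :=
  forall b, B b -> exists s : list X,
    forall x, section b [:: x] <> id -> List.In x s.

End Tree.

(* Main.v *)
Require Import Defs.
From Stdlib Require List.
From mathcomp Require Import all_boot.
From Stdlib Require Import FunctionalExtensionality Classical.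
Set Implicit Arguments. Unset Strict Implicit. Unset Printing Implicit Defensive.

Notation cmp := Defs.comp.

Section Gen.
Variable T : Type.

Lemma gpowS (f : T -> T) n : gpow f n.+1 = cmp (gpow f n) f.
Proof. by []. Qed.

Lemma gpow_add (f : T -> T) m n : gpow f (m + n) = cmp (gpow f m) (gpow f n).
Proof.
elim: n => [|n IH]; first by rewrite addn0; apply: functional_extensionality.
by rewrite addnS gpowS IH.
Qed.

Lemma gpow_mul (f : T -> T) m n : gpow f (m * n) = gpow (gpow f m) n.
Proof.
elim: n => [|n IH]; first by rewrite muln0.
by rewrite mulnSr gpow_add IH.
Qed.

Lemma gpow_fix (f : T -> T) v n : f v = v -> gpow f n v = v.
Proof. move=> H; elim: n => [|n IH] //=; by rewrite /Defs.comp IH H. Qed.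

Lemma gpow_id n : gpow (@id T) n = id.
Proof. elim: n => [|n IH] //=; by rewrite IH. Qed.

Lemma fo_pow (s : T -> T) q : finite_order s -> finite_order (gpow s q).
Proof.
move=> [n [Hn Hs]]; exists n; split => //.
by rewrite -gpow_mul mulnC gpow_mul Hs gpow_id.
Qed.

Lemma inv_uniq (s t t' : T -> T) : cancel s t -> cancel t' s -> t = t'.
Proof. move=> H1 H2; apply: functional_extensionality => z; by rewrite -{1}(H2 z) H1. Qed.

Lemma inv_list (L : seq (T -> T)) : exists L', forall s t, List.In s L ->
  cancel s t -> cancel t s -> List.In t L'.
Proof.
elim: L => [|s L [L0 IH]]; first by exists [::].
case: (classic (exists t, cancel s t /\ cancel t s)) => [[t0 [H1 H2]]|Hno].
- exists (t0 :: L0) => s' t [<-|Hin] Hc1 Hc2.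
  + left; exact: (inv_uniq H1 Hc2).
  + right; exact: IH Hin Hc1 Hc2.
- exists L0 => s' t [Heq|Hin] Hc1 Hc2.
  + by exfalso; apply: Hno; exists t; subst.
  + exact: IH Hin Hc1 Hc2.
Qed.

Lemma prod_list (L1 L2 : seq (T -> T)) : exists L, forall s t, List.In s L1 ->
  List.In t L2 -> List.In (cmp s t) L.
Proof.
elim: L1 => [|s L1 [L0 IH]]; first by exists [::].
exists (map (cmp s) L2 ++ L0) => s' t [<-|Hin] Ht; apply: List.in_or_app.
- left; exact: List.in_map.
- right; exact: IH.
Qed.

Lemma list_bound (U : Type) (L : seq U) (P : U -> Prop) (Q : U -> nat -> Prop) :
  (forall s N M, Q s N -> Q s (N * M)) ->
  (forall s, List.In s L -> P s -> exists N, 0 < N /\ Q s N) ->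
  exists N, 0 < N /\ forall s, List.In s L -> P s -> Q s N.
Proof.
move=> HQ; elim: L => [|s L IH] H; first by exists 1.
case: IH => [s' Hs' Ps'|N1 [HN1 H1]]; first by apply: H => //; right.
case: (classic (P s)) => [Ps|nPs].
- case: (H s (or_introl erefl) Ps) => N0 [HN0 H0].
  exists (N0 * N1); split; first by rewrite muln_gt0 HN0.
  move=> s' [<-|Hin] Ps'; first exact: HQ H0.
  rewrite mulnC; apply: HQ; exact: H1 Hin Ps'.
- exists N1; split => // s' [<-|Hin] Ps'; first by [].
  exact: H1.
Qed.

Lemma min_ex (P : nat -> Prop) : (exists n, P n) -> exists n, P n /\ forall k, k < n -> ~ P k.
Proof.
move=> [n Hn]; move: Hn; elim/ltn_ind: n => n IH Hn.
case: (classic (exists k, k < n /\ P k)) => [[k [Hk Pk]]|Hno].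
- exact: IH Hk Pk.
- exists n; split => // k Hk Pk; apply: Hno; by exists k.
Qed.

End Gen.
Section Tree2.
Variable X : Type.
Notation tm := (seq X -> seq X).

Lemma aut_size (f : tm) u : isAut f -> size (f u) = size u.
Proof. by case=> _ [H _]. Qed.

Lemma aut_cat (f : tm) u w : isAut f -> f (u ++ w) = f u ++ section f u w.
Proof.
case=> _ [_ H]; rewrite /section -{1}(cat_take_drop (size u) (f (u ++ w))).
by rewrite H.
Qed.

Lemma aut_take (f : tm) u w : isAut f -> take (size u) (f (u ++ w)) = f u.
Proof. by case=> _ [_ H]. Qed.

Lemma section_comp (f g : tm) u : isAut f -> isAut g ->
  section (cmp f g) u = cmp (section f u) (section g (f u)).
Proof.
move=> Hf Hg; apply: functional_extensionality => w.
rewrite /Defs.comp {1}/section (aut_cat u w Hf) (aut_cat (f u) _ Hg) drop_size_cat //.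
by rewrite (aut_size _ Hg) (aut_size _ Hf).
Qed.

Lemma section_nil (f : tm) : section f [::] = f.
Proof. apply: functional_extensionality => w; by rewrite /section drop0. Qed.

Lemma section_cat (f : tm) u w : section f (u ++ w) = section (section f u) w.
Proof.
apply: functional_extensionality => z.
by rewrite /section drop_drop -catA size_cat addnC.
Qed.

Lemma section_cons (f : tm) x w : section f (x :: w) = section (section f [:: x]) w.
Proof. exact: (section_cat f [:: x] w). Qed.

Lemma section_id u : section (@id (seq X)) u = id.
Proof. apply: functional_extensionality => z; by rewrite /section drop_size_cat. Qed.

Lemma isAut_id : isAut (@id (seq X)).
Proof.
split; first by exists id.
split => // u v; by rewrite take_size_cat.
Qed.

Lemma isAut_comp (f g : tm) : isAut f -> isAut g -> isAut (cmp f g).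
Proof.
move=> Hf Hg; split.
  case: Hf => [Bf _]; case: Hg => [Bg _]; exact: (bij_comp Bg Bf).
split => [u|u v]; first by rewrite /Defs.comp (aut_size _ Hg) (aut_size _ Hf).
rewrite /Defs.comp (aut_cat u v Hf) -(aut_size u Hf) aut_take //.
Qed.

Lemma isAut_inv (f h : tm) : isAut f -> cancel f h -> cancel h f -> isAut h.
Proof.
move=> Hf c1 c2; split; first by exists f.
have Hs : forall u, size (h u) = size u.
  by move=> u; rewrite -{2}(c2 u) (aut_size _ Hf).
split => // u v.
set y := h (u ++ v).
have E : f y = u ++ v by rewrite /y c2.
have Ey : y = take (size u) y ++ drop (size u) y by rewrite cat_take_drop.
have Hk : size (take (size u) y) = size u.
  by rewrite size_take /y Hs size_cat; case: ltnP => // H; apply/eqP; rewrite eqn_leq H leq_addr.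
have E2 : f (take (size u) y) = u.
  move: E; rewrite {1}Ey (aut_cat _ _ Hf) => E.
  have := congr1 (take (size u)) E.
  by rewrite !take_size_cat // (aut_size _ Hf).
by rewrite -{2}E2 c1.
Qed.

Lemma isAut_gpow (f : tm) n : isAut f -> isAut (gpow f n).
Proof. move=> Hf; elim: n => [|n IH]; [exact: isAut_id | exact: isAut_comp]. Qed.

Lemma section_gpow (f : tm) u n : isAut f -> f u = u ->
  section (gpow f n) u = gpow (section f u) n.
Proof.
move=> Hf Hu; elim: n => [|n IH]; first exact: section_id.
rewrite gpowS section_comp //; last exact: isAut_gpow.
by rewrite IH gpow_fix.
Qed.

Lemma gpow_cat (f : tm) u w n : isAut f -> f u = u ->
  gpow f n (u ++ w) = u ++ gpow (section f u) n w.
Proof.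
move=> Hf Hu; rewrite (aut_cat _ _ (isAut_gpow n Hf)) gpow_fix //.
by rewrite section_gpow.
Qed.

Lemma sec_cancel (f h : tm) u : isAut f -> isAut h -> cancel f h ->
  cancel (section f u) (section h (f u)).
Proof.
move=> Hf Hh c w.
have E : cmp f h = id by apply: functional_extensionality => z; exact: c.
have := section_comp u Hf Hh; rewrite E section_id => E2.
by have := congr1 (fun F => F w) E2.
Qed.

Lemma rooted_comp (a b : X -> X) : cmp (rooted a) (rooted b) = rooted (cmp a b).
Proof. by apply: functional_extensionality => -[|x w]. Qed.

Lemma rooted_id : rooted (@id X) = id.
Proof. by apply: functional_extensionality => -[|x w]. Qed.

Lemma gpow_rooted (a : X -> X) n : gpow (rooted a) n = rooted (gpow a n).
Proof.
elim: n => [|n IH]; first by rewrite rooted_id.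
by rewrite gpowS IH rooted_comp.
Qed.

Lemma section_rooted (a : X -> X) x w : section (rooted a) (x :: w) = id.
Proof.
apply: functional_extensionality => z; rewrite /section /=.
by rewrite drop_size_cat.
Qed.

Lemma isAut_rooted (a : X -> X) : bijective a -> isAut (rooted a).
Proof.
case=> a' c1 c2; split.
  by exists (rooted a') => -[|x w] //=; rewrite ?c1 ?c2.
split => [[|x w]|[|x u] v] //=.
  by rewrite take0. by rewrite take_size_cat.
Qed.

End Tree2.
Section CS.
Variables (X : Type) (x0 : X) (A : (X -> X) -> Prop) (B : (seq X -> seq X) -> Prop).
Hypothesis HCS : isCS x0 A B.
Notation tm := (seq X -> seq X).
Notation G := (CSgroup A B).

Lemma A_bij f : A f -> bijective f.
Proof. case: HCS => [[H _] _]; exact: H. Qed.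
Lemma A_id : A id.
Proof. by case: HCS => [[_ [H _]] _]. Qed.
Lemma A_comp f g : A f -> A g -> A (cmp f g).
Proof. case: HCS => [[_ [_ [H _]]] _]; exact: H. Qed.
Lemma A_inv f : A f -> exists h, A h /\ cancel f h /\ cancel h f.
Proof. case: HCS => [[_ [_ [_ H]]] _]; exact: H. Qed.
Lemma B_inv f : B f -> exists h, B h /\ cancel f h /\ cancel h f.
Proof. case: HCS => [_ [_ [[_ [_ [_ H]]] _]]]; exact: H. Qed.
Lemma B_aut b : B b -> isAut b.
Proof. case: HCS => [_ [_ [_ [H _]]]] Hb; by case: (H b Hb). Qed.
Lemma B_lev1 b x : B b -> b [:: x] = [:: x].
Proof. case: HCS => [_ [_ [_ [H _]]]] Hb; by case: (H b Hb). Qed.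
Lemma B_x0 b : B b -> section b [:: x0] = b.
Proof. case: HCS => [_ [_ [_ [_ [H _]]]]]; exact: H. Qed.
Lemma B_x b x : B b -> x <> x0 -> exists rho, A rho /\ section b [:: x] = rooted rho.
Proof. case: HCS => [_ [_ [_ [_ [_ [H _]]]]]]; exact: H. Qed.

Lemma inA_id : inA A (@id (seq X)).
Proof. exists id; split; [exact: A_id | by rewrite rooted_id]. Qed.

Lemma inA_comp f g : inA A f -> inA A g -> inA A (cmp f g).
Proof.
move=> [a [Ha ->]] [b [Hb ->]]; exists (cmp a b); split; first exact: A_comp.
by rewrite rooted_comp.
Qed.

Lemma B_sec b : B b -> forall v, v = nseq (size v) x0 \/ inA A (section b v).
Proof.
move=> Hb; elim => [|x w IH]; first by left.
rewrite section_cons.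
case: (classic (x = x0)) => [->|Hx].
- rewrite B_x0 //; case: IH => [E|]; last by right.
  by left; rewrite /= -E.
- right; case: (B_x Hb Hx) => rho [Hr ->].
  case: w {IH} => [|y w].
  + rewrite section_nil; by exists rho.
  + rewrite section_rooted; exact: inA_id.
Qed.

Lemma B_secfin b s : B b -> (forall x, section b [:: x] <> id -> List.In x s) ->
  forall v, section b v = b \/ section b v = id \/
            exists y, List.In y s /\ section b v = section b [:: y].
Proof.
move=> Hb Hs; elim => [|x w IH]; first by left; rewrite section_nil.
case: (classic (x = x0)) => [->|Hx].
- by rewrite section_cons B_x0.
- case: w {IH} => [|y w].
  + case: (classic (section b [:: x] = id)) => [E|E]; first by right; left.
    right; right; exists x; split => //; exact: Hs.
  + right; left; rewrite section_cons; case: (B_x Hb Hx) => rho [_ ->].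
    exact: section_rooted.
Qed.

Lemma rooted_cancel (a b : X -> X) : cancel a b -> cancel (rooted a) (rooted b).
Proof. by move=> c [|x w] //=; rewrite c. Qed.

Definition Inv (h : tm) : Prop :=
  [/\ isAut h,
      exists a, A a /\ forall x, h [:: x] = [:: a x],
      forall x, G (section h [:: x]),
      forall m, exists Vs : seq (seq X), forall v, size v = m ->
          List.In v Vs \/ inA A (section h v) &
      finite_support B -> forall m, exists L : seq tm, forall v, size v = m ->
          List.In (section h v) L].

Lemma Inv_gen h : G h -> Inv h.
Proof.
elim => {h} [b [[rho [Hr ->]]|Hb]| |f g _ [Af [a [Ha Ea]] Sf Ef Ff] _ [Ag [a' [Ha' Ea']] Sg Eg Fg]
            |f h _ [Af [a [Ha Ea]] Sf Ef Ff] c1 c2].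
-
  split.
  + exact: isAut_rooted (A_bij Hr).
  + by exists rho.
  + move=> x; rewrite section_rooted; exact: gen_id.
  + move=> m; exists [:: [::]] => -[|x w] _; first by left; left.
    right; rewrite section_rooted; exact: inA_id.
  + move=> _ m; exists [:: rooted rho; id] => -[|x w] _.
    * by left; rewrite section_nil.
    * by right; left; rewrite section_rooted.
-
  split.
  + exact: B_aut.
  + exists id; split; [exact: A_id | move=> x; exact: B_lev1].
  + move=> x; case: (classic (x = x0)) => [->|Hx].
    * rewrite B_x0 //; apply: gen_S; by right.
    * case: (B_x Hb Hx) => rho [Hr ->]; apply: gen_S; left; by exists rho.
  + move=> m; exists [:: nseq m x0] => v Hv.
    case: (B_sec Hb v) => [E|]; last by right.
    by left; left; rewrite E Hv.
  + move=> Hfs m; case: (Hfs b Hb) => s Hs.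
    exists (b :: id :: map (fun y => section b [:: y]) s) => v _.
    case: (B_secfin Hb Hs v) => [->|[->|[y [Hy ->]]]]; [by left | by right; left |].
    right; right; exact: (List.in_map (fun y => section b [:: y])).
-
  split.
  + exact: isAut_id.
  + exists id; split => //; exact: A_id.
  + move=> x; rewrite section_id; exact: gen_id.
  + move=> m; exists [::] => v _; right; rewrite section_id; exact: inA_id.
  + move=> _ m; exists [:: id] => v _; by rewrite section_id; left.
-
  split.
  + exact: isAut_comp.
  + exists (cmp a a'); split; first exact: A_comp.
    by move=> x; rewrite /Defs.comp Ea Ea'.
  + move=> x; rewrite section_comp // Ea; apply: gen_comp; [exact: Sf | exact: Sg].
  + move=> m; case: (Ef m) => Vf HVf; case: (Eg m) => Vg HVg.
    have [finv c1 _] : bijective f by case: Af.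
    exists (Vf ++ map finv Vg) => v Hv.
    case: (HVf v Hv) => [Hin|Hsf]; first by left; apply: List.in_or_app; left.
    have Hv' : size (f v) = m by rewrite (aut_size _ Af).
    case: (HVg (f v) Hv') => [Hin|Hsg].
    * left; apply: List.in_or_app; right; rewrite -(c1 v); exact: List.in_map.
    * right; rewrite section_comp //; exact: inA_comp.
  + move=> Hfs m; case: (Ff Hfs m) => Lf HLf; case: (Fg Hfs m) => Lg HLg.
    case: (prod_list Lf Lg) => L HL; exists L => v Hv.
    rewrite section_comp //; apply: HL; [exact: HLf | apply: HLg; by rewrite (aut_size _ Af)].
-
  have Ah : isAut h := isAut_inv Af c1 c2.
  split.
  + exact Ah.
  + case: (A_inv Ha) => a' [Ha' [d1 d2]]; exists a'; split => // x.
    by rewrite -{1}(d2 x) -Ea c1.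
  + move=> x; have := aut_size [:: x] Ah.
    case Eu : (h [:: x]) => [|y [|z w]] // _.
    have Hx : [:: x] = f [:: y] by rewrite -Eu c2.
    rewrite Hx; apply: (gen_inv (Sf y)); first exact: sec_cancel.
    have := sec_cancel (f [:: y]) Ah Af c2; by rewrite c1.
  + move=> m; case: (Ef m) => Vf HVf; exists (map f Vf) => v Hv.
    have Hv' : size (h v) = m by rewrite (aut_size _ Ah).
    case: (HVf _ Hv') => [Hin|[a0 [Ha0 E]]].
    * left; rewrite -(c2 v); exact: List.in_map.
    * right; case: (A_inv Ha0) => b0 [Hb0 [d1 d2]]; exists b0; split => //.
      have C1 := sec_cancel (h v) Af Ah c1.
      rewrite c2 E in C1.
      apply: (inv_uniq C1); exact: rooted_cancel.
  + move=> Hfs m; case: (Ff Hfs m) => Lf HLf; case: (inv_list Lf) => L HL; exists L => v Hv.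
    apply: (HL (section f (h v))).
    * apply: HLf; by rewrite (aut_size _ Ah).
    * have := sec_cancel (h v) Af Ah c1; by rewrite c2.
    * exact: sec_cancel.
Qed.

Lemma G_gpow h n : G h -> G (gpow h n).
Proof. move=> Hh; elim: n => [|n IH]; [exact: gen_id | exact: gen_comp]. Qed.

Lemma G_sec h v : G h -> G (section h v).
Proof.
elim: v h => [|x w IH] h Hh; first by rewrite section_nil.
rewrite section_cons; apply: IH; by case: (Inv_gen Hh).
Qed.

Lemma act_gpow (h : tm) a : (forall x, h [:: x] = [:: a x]) ->
  forall n x, gpow h n [:: x] = [:: gpow a n x].
Proof. move=> Ea; elim => [|n IH] x //=; by rewrite /Defs.comp IH Ea. Qed.

Lemma gpow_nil (h : tm) n : isAut h -> gpow h n [::] = [::].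
Proof. move=> Ah; apply: size0nil; by rewrite (aut_size _ (isAut_gpow n Ah)). Qed.

Lemma fo_rooted rho : periodic A -> A rho -> finite_order (rooted rho).
Proof.
move=> Hper Hr; case: (Hper rho Hr) => k [Hk Hrk]; exists k; split => //.
by rewrite gpow_rooted Hrk rooted_id.
Qed.

Lemma LEV : periodic A -> (finite_exponent A \/ finite_support B) ->
  forall m h, G h -> exists N, 0 < N /\ forall v, size v = m -> gpow h N v = v.
Proof.
move=> Hper [[e [He HA]]|Hfs].
- suff S : forall m h, G h -> forall v, size v = m -> gpow h (e ^ m) v = v.
    move=> m h Hh; exists (e ^ m); split; [by rewrite expn_gt0 He | exact: S].
  elim => [|m IH] h Hh v Hv.
  + rewrite (size0nil Hv); case: (Inv_gen Hh) => Ah _ _ _ _; exact: gpow_nil.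
  + case: v Hv => [|x w] // [Hw].
    case: (Inv_gen Hh) => Ah [a [Ha Ea]] _ _ _.
    rewrite expnS gpow_mul.
    have Ah1 : isAut (gpow h e) := isAut_gpow e Ah.
    have Fx : gpow h e [:: x] = [:: x] by rewrite (act_gpow Ea) (HA a Ha).
    have -> : x :: w = [:: x] ++ w by [].
    rewrite (gpow_cat _ _ Ah1 Fx) IH //.
    apply: G_sec; exact: G_gpow.
- elim => [|m IH] h Hh.
  + exists 1; split => // v Hv; rewrite (size0nil Hv).
    case: (Inv_gen Hh) => Ah _ _ _ _; exact: gpow_nil.
  + case: (Inv_gen Hh) => Ah [a [Ha Ea]] _ _ _.
    case: (Hper a Ha) => k [Hk Hak].
    have Gh1 := G_gpow k Hh.
    case: (Inv_gen Gh1) => Ah1 _ _ _ F1.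
    case: (F1 Hfs 1) => L HL.
    case: (list_bound (L := L) (P := fun s => G s)
             (Q := fun s N => forall w, size w = m -> gpow s N w = w))
      => [s N M H w Hw|s _ Gs|N [HN HNp]].
    * by rewrite gpow_mul gpow_fix // H.
    * exact: IH.
    * exists (k * N); split; first by rewrite muln_gt0 Hk.
      move=> [|x w] // [Hw]; rewrite gpow_mul.
      have Fx : gpow h k [:: x] = [:: x] by rewrite (act_gpow Ea) Hak.
      have -> : x :: w = [:: x] ++ w by [].
      rewrite (gpow_cat _ _ Ah1 Fx) HNp //; first exact: HL.
      exact: G_sec.
Qed.

Lemma core : periodic A -> (finite_exponent A \/ finite_support B) ->
  forall g, G g -> (exists m, forall v l, size v = m -> orbit_len g v l ->
     finite_order (orbit_section g v l)) -> finite_order g.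
Proof.
move=> Hper Hcase g Hg [m Hm].
case: (LEV Hper Hcase m Hg) => N [HN HNv].
have Gg' : G (gpow g N) := G_gpow N Hg.
case: (Inv_gen Gg') => Ag' _ _ Eg' Fg'.
have Ag : isAut g by case: (Inv_gen Hg).
have Fin : forall v, size v = m -> finite_order (section (gpow g N) v).
  move=> v Hv.
  case: (min_ex (P := fun l => 0 < l /\ gpow g l v = v)) => [|l [[Hl Hlv] Hmin]].
    by exists N; split => //; exact: HNv.
  have Ho : orbit_len g v l.
    split; [done|split; [done|]] => k /andP [Hk1 Hk2] Hkv; exact: (Hmin k Hk2 (conj Hk1 Hkv)).
  have Hr : N %% l = 0.
    case: (posnP (N %% l)) => [//|Hr].
    exfalso; apply: (Hmin (N %% l)); first exact: ltn_pmod.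
    split => //.
    have := HNv v Hv; rewrite {1}(divn_eq N l) gpow_add /Defs.comp (mulnC (N %/ l) l).
    by rewrite gpow_mul (@gpow_fix _ (gpow g l) v (N %/ l) Hlv).
  have EN : N = l * (N %/ l) by rewrite {1}(divn_eq N l) Hr addn0 mulnC.
  have -> : section (gpow g N) v = gpow (orbit_section g v l) (N %/ l).
    rewrite {1}EN gpow_mul /orbit_section section_gpow //; exact: isAut_gpow.
  apply: fo_pow; exact: Hm.
have [M [HM HMv]] : exists M, 0 < M /\ forall v, size v = m ->
    gpow (section (gpow g N) v) M = id.
  case: Hcase => [[e [He HA]]|Hfs].
  - case: (Eg' m) => Vs HVs.
    case: (list_bound (L := Vs) (P := fun v => size v = m)
       (Q := fun v M => gpow (section (gpow g N) v) M = id)) => [v M1 M2 H|v _ Hv|M1 [HM1 H1]].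
    + by rewrite gpow_mul H gpow_id.
    + case: (Fin v Hv) => n [Hn Hn2]; by exists n.
    + exists (M1 * e); split; first by rewrite muln_gt0 HM1.
      move=> v Hv; case: (HVs v Hv) => [Hin|[a [Ha ->]]].
      * by rewrite gpow_mul H1 // gpow_id.
      * by rewrite gpow_rooted mulnC gpow_mul HA // gpow_id rooted_id.
  - case: (Fg' Hfs m) => L HL.
    case: (list_bound (L := L) (P := fun s => exists v, size v = m /\ section (gpow g N) v = s)
       (Q := fun s M => gpow s M = id)) => [s M1 M2 H|s _ [v [Hv <-]]|M1 [HM1 H1]].
    + by rewrite gpow_mul H gpow_id.
    + case: (Fin v Hv) => n [Hn Hn2]; by exists n.
    + exists M1; split => // v Hv; apply: H1; [exact: HL | by exists v].
exists (N * M); split; first by rewrite muln_gt0 HN.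
rewrite gpow_mul; apply: functional_extensionality => z.
case: (leqP m (size z)) => Hz.
- rewrite -(cat_take_drop m z).
  have Ht : size (take m z) = m by rewrite size_takel.
  rewrite (gpow_cat _ _ Ag' (HNv _ Ht)) HMv //.
- have Hv' : size (z ++ nseq (m - size z) x0) = m by rewrite size_cat size_nseq subnKC // ltnW.
  have E1 : gpow (gpow g N) M (z ++ nseq (m - size z) x0) = z ++ nseq (m - size z) x0.
    by apply: gpow_fix; exact: HNv.
  have := aut_take z (nseq (m - size z) x0) (isAut_gpow M Ag').
  by rewrite E1 take_size_cat // => <-.
Qed.

End CS.

Theorem mainTheorem5 (X : Type) (x0 : X) (A : (X -> X) -> Prop)
  (B : (seq X -> seq X) -> Prop) (T : (seq X -> seq X) -> Prop) :
  isCS x0 A B ->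
  periodic A ->
  (finite_exponent A \/ finite_support B) ->
  (forall t, T t -> CSgroup A B t /\ finite_order t) ->
  (forall g, CSgroup A B g -> ~ inA A g ->
     exists m : nat, forall (v : seq X) (l : nat), size v = m -> orbit_len g v l ->
       (exists n1 n2, is_syl A B (orbit_section g v l) n1 /\ is_syl A B g n2 /\ n1 < n2)
       \/ T (orbit_section g v l)) ->
  periodic (CSgroup A B).
Proof.
move=> HCS Hper Hcase HT Hhyp.
have core' := core HCS Hper Hcase.
suff S : forall n g, CSgroup A B g -> is_syl A B g n -> finite_order g.
  move=> g Hg.
  case: (classic (exists n, is_syl A B g n)) => [[n Hn]|Hno]; first exact: S Hn.
  case: (classic (inA A g)) => [[rho [Hr ->]]|HnA]; first exact: fo_rooted Hper Hr.
  apply: (core' g Hg); case: (Hhyp g Hg HnA) => m Hm; exists m => v l Hv Ho.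
  case: (Hm v l Hv Ho) => [[n1 [n2 [_ [H2 _]]]]|HTv]; first by exfalso; apply: Hno; exists n2.
  by case: (HT _ HTv).
elim/ltn_ind => n IH g Hg Hn.
case: (classic (inA A g)) => [[rho [Hr ->]]|HnA]; first exact: fo_rooted Hper Hr.
apply: (core' g Hg); case: (Hhyp g Hg HnA) => m Hm; exists m => v l Hv Ho.
case: (Hm v l Hv Ho) => [[n1 [n2 [H1 [H2 Hlt]]]]|HTv]; last by case: (HT _ HTv).
have E : n2 = n.
  by apply/eqP; rewrite eqn_leq (proj2 H2 _ (proj1 Hn)) (proj2 Hn _ (proj1 H2)).
apply: (IH n1); [by rewrite -E | | exact: H1].
rewrite /orbit_section; apply: (G_sec HCS); exact: (G_gpow _ Hg).
Qed.
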